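(* Let $n\ge3$. For $k=0$ and every $0$-jet $j^0\Gamma\in\mathcal{F}_0$, the stabilizer subalgebra of $j^0\Gamma$ in $\mathfrak{k}_0$ projects isomorphically onto the space of linear vector fields $V_1$ (i.e. $V_1$ is arbitrary and $V_2$ is uniquely determined by $V_1$), so it has dimension $n^2$. For every $k\ge1$, there is an open dense subset of $\mathcal{F}_k$ such that for every $j^k\Gamma$ in it the stabilizer subalgebra of $j^k\Gamma$ in $\mathfrak{k}_k$ is $\{0\}$.
   Context: A symmetric connection near $0\in\mathbb{R}^n$ is given by smooth Christoffel symbols $\Gamma^l_{ij}=\Gamma^l_{ji}$. $\mathcal{F}_k$ denotes the (finite-dimensional) vector space of $k$-jets at $0$ of such connections, i.e. of degree-$\le k$ Taylor polynomials of the $\Gamma^l_{ij}$ at $0$. The group $G=\mathrm{Diff}(\mathbb{R}^n,0)$ of germs of origin-preserving diffeomorphisms acts on connections by $(\varphi^*\nabla)_XY=(\varphi_* )^{-1}(\nabla_{\varphi_*X}\varphi_*Y)$, hence on $\mathcal{F}_k$; this action factors through the finite-dimensional Lie group $K_k=G/G_{k+3}$, where $G_m=\{\varphi\in G:\varphi(x)=x+O(|x|^m)\}$. The Lie algebra $\mathfrak{k}_k$ of $K_k$ is identified with polynomial vector fields $V=V_1+V_2+\dots+V_{k+2}$ with $V_m$ having homogeneous components of degree $m$ (so $V(0)=0$); it acts on $\mathcal{F}_k$ by $j^k\Gamma\mapsto j^k(\mathcal{L}_V\Gamma)$, where $(\mathcal{L}_V\Gamma)^l_{ij}=V^k\partial_k\Gamma^l_{ij}-\Gamma^k_{ij}\partial_kV^l+\Gamma^l_{kj}\partial_iV^k+\Gamma^l_{ik}\partial_jV^k+\partial_i\partial_jV^l$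 (this is well defined on $k$-jets since $V(0)=0$). The stabilizer subalgebra of $j^k\Gamma$ is $\{V\in\mathfrak{k}_k: j^k(\mathcal{L}_V\Gamma)=0\}$. *)

(* Defs.v *)
From mathcomp Require Import all_boot all_order all_algebra.
From mathcomp Require Import reals.
From mathcomp Require Import mpoly.
Set Implicit Arguments. Unset Strict Implicit. Unset Printing Implicit Defensive.
Import Order.TTheory GRing.Theory Num.Theory.
Local Open Scope ring_scope.

(* A (polynomial representative of a) jet of Christoffel symbols:
   G l i j = Gamma^l_{ij}, a polynomial in x_0..x_{n-1}. *)
Definition chris (R : realType) (n : nat) := 'I_n -> 'I_n -> 'I_n -> {mpoly R[n]}.

Definition vfield (R : realType) (n : nat) := 'I_n -> {mpoly R[n]}.

(* F_k : symmetric Christoffel symbols with polynomial entries of degree <= k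
   (the k-jets at 0, identified with their Taylor polynomials). *)
Definition conn_jet (R : realType) (n k : nat) (G : chris R n) : Prop :=
  forall l i j, G l i j = G l j i /\
                (forall m : 'X_{1..n}, (k < mdeg m)%N -> (G l i j)@_m = 0).

Definition kalg (R : realType) (n k : nat) (V : vfield R n) : Prop :=
  forall l, (V l)@_0%MM = 0 /\
            (forall m : 'X_{1..n}, (k.+2 < mdeg m)%N -> (V l)@_m = 0).

Definition lie (R : realType) (n : nat) (V : vfield R n) (G : chris R n)
  (l i j : 'I_n) : {mpoly R[n]} :=
    \sum_(a < n) (V a * mderiv a (G l i j))
  - \sum_(a < n) (G a i j * mderiv a (V l))
  + \sum_(a < n) (G l a j * mderiv i (V a))
  + \sum_(a < n) (G l i a * mderiv j (V a))
  + mderiv i (mderiv j (V l)).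

Definition jet_zero (R : realType) (n k : nat) (p : {mpoly R[n]}) : Prop :=
  forall m : 'X_{1..n}, (mdeg m <= k)%N -> p@_m = 0.

Definition stab (R : realType) (n k : nat) (G : chris R n) (V : vfield R n) : Prop :=
  kalg k V /\ forall l i j, jet_zero k (lie V G l i j).

(* Standard topology of the finite-dimensional real vector space F_k,
   given by the sup-norm on the (finitely many) coefficients. *)
Definition jet_close (R : realType) (n : nat) (e : R) (G G' : chris R n) : Prop :=
  forall l i j (m : 'X_{1..n}), `|(G' l i j)@_m - (G l i j)@_m| < e.

Definition jet_open (R : realType) (n k : nat) (S : chris R n -> Prop) : Prop :=
  forall G, S G -> exists2 e : R, 0 < e &
    forall G', conn_jet k G' -> jet_close e G G' -> S G'.

Definition jet_dense (R : realType) (n k : nat) (S : chris R n -> Prop) : Prop :=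
  forall G, conn_jet k G -> forall e : R, 0 < e ->
    exists G', S G' /\ jet_close e G G'.

(* Main.v *)
Require Import Defs.
From mathcomp Require Import all_boot all_order all_algebra.
From mathcomp Require Import reals.
From mathcomp Require Import mpoly.
From mathcomp Require Import ring lra zify.
From mathcomp Require Import fingroup perm.
From Stdlib Require Import FunctionalExtensionality.
Import Order.TTheory GRing.Theory Num.Theory.
Local Open Scope ring_scope.
Set Implicit Arguments. Unset Strict Implicit. Unset Printing Implicit Defensive.

Section Basics.
Variables (R : realType) (n : nat).
Implicit Types (p q : {mpoly R[n]}).

Lemma coefM0 p q : (p * q)@_0%MM = p@_0%MM * q@_0%MM.
Proof. exact: (rmorphM (mcoeff 0%MM : {mpoly R[n]} -> R)). Qed.

Lemma coefD1 (a : 'I_n) p : (mderiv a p)@_0%MM = p@_U_(a).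
Proof. by rewrite mcoeff_deriv add0m mnmE mulr1n. Qed.

Lemma coef_sum (F : 'I_n -> {mpoly R[n]}) m :
  (\sum_(a < n) F a)@_m = \sum_(a < n) (F a)@_m.
Proof. exact: raddf_sum. Qed.

Lemma coef_sumT (I : Type) (r : seq I) (P : pred I) (F : I -> {mpoly R[n]}) m :
  (\sum_(a <- r | P a) F a)@_m = \sum_(a <- r | P a) (F a)@_m.
Proof. exact: raddf_sum. Qed.

Lemma coefM1 (m : 'I_n) p q :
  (p * q)@_U_(m) = p@_0%MM * q@_U_(m) + p@_U_(m) * q@_0%MM.
Proof. by rewrite -coefD1 mderivM mcoeffD !coefM0 !coefD1 addrC. Qed.


Definition L0 (V : vfield R n) (G : chris R n) l i j := (lie V G l i j)@_0%MM.
Definition L1 (V : vfield R n) (G : chris R n) l i j m := (lie V G l i j)@_U_(m).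
Definition corr (V : vfield R n) (G : chris R n) (l i j m : 'I_n) :=
  - (\sum_(a < n) (G a i j)@_0%MM * L0 V G l m a)
  + \sum_(a < n) (G l a j)@_0%MM * L0 V G a m i
  + \sum_(a < n) (G l i a)@_0%MM * L0 V G a m j.
Definition Phi (V : vfield R n) (G : chris R n) (l i j m : 'I_n) :=
  (L1 V G l i j m - corr V G l i j m) - (L1 V G l i m j - corr V G l i m j).

Lemma L0E V G l i j : L0 V G l i j =
    \sum_(a < n) (V a)@_0%MM * (G l i j)@_U_(a)
  - \sum_(a < n) (G a i j)@_0%MM * (V l)@_U_(a)
  + \sum_(a < n) (G l a j)@_0%MM * (V a)@_U_(i)
  + \sum_(a < n) (G l i a)@_0%MM * (V a)@_U_(j)
  + (mderiv i (mderiv j (V l)))@_0%MM.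
Proof.
rewrite /L0 /lie !mcoeffD mcoeffN !coef_sum.
by congr (_ - _ + _ + _ + _); apply: eq_bigr => a _; rewrite coefM0 coefD1.
Qed.

Lemma L1E V G l i j m : L1 V G l i j m =
    \sum_(a < n) ((V a)@_0%MM * (mderiv a (G l i j))@_U_(m) + (V a)@_U_(m) * (G l i j)@_U_(a))
  - \sum_(a < n) ((G a i j)@_0%MM * (mderiv a (V l))@_U_(m) + (G a i j)@_U_(m) * (V l)@_U_(a))
  + \sum_(a < n) ((G l a j)@_0%MM * (mderiv i (V a))@_U_(m) + (G l a j)@_U_(m) * (V a)@_U_(i))
  + \sum_(a < n) ((G l i a)@_0%MM * (mderiv j (V a))@_U_(m) + (G l i a)@_U_(m) * (V a)@_U_(j))
  + (mderiv i (mderiv j (V l)))@_U_(m).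
Proof.
rewrite /L1 /lie !mcoeffD mcoeffN !coef_sum.
by congr (_ - _ + _ + _ + _); apply: eq_bigr => a _; rewrite coefM1 !coefD1.
Qed.

Lemma Phi_high (W : vfield R n) G (h0 : forall l, (W l)@_0%MM = 0)
   (h1 : forall l s, (W l)@_U_(s) = 0) l i j m : Phi W G l i j m = 0.
Proof.
have L0W x y z : L0 W G x y z = (mderiv z (W x))@_U_(y).
  rewrite L0E !big1 ?(subrr, add0r) ?coefD1 // => a _; by rewrite ?h0 ?h1 ?mulr0 ?mul0r.
have L1W x y z w : L1 W G x y z w - corr W G x y z w =
   (mderiv w (mderiv y (mderiv z (W x))))@_0%MM.
  rewrite L1E /corr coefD1.
  rewrite big1 ?add0r; last by move=> a _; rewrite h0 h1 !mul0r add0r.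
  under eq_bigr => a _ do rewrite h1 mulr0 addr0.
  under [X in _ + X + _ + _]eq_bigr => a _ do rewrite h1 mulr0 addr0.
  under [X in _ + X + _]eq_bigr => a _ do rewrite h1 mulr0 addr0.
  have -> : L0 W G = fun x y z => (mderiv z (W x))@_U_(y).
    by do 3 (apply: functional_extensionality => ?); rewrite L0W.
  by ring.
rewrite /Phi !L1W.
have -> : mderiv m (mderiv i (mderiv j (W l))) = mderiv j (mderiv i (mderiv m (W l))).
  by rewrite [mderiv i (mderiv j _)]mderiv_comm mderiv_comm [mderiv m (mderiv i _)]mderiv_comm.
by rewrite subrr.
Qed.


Lemma sumH1 (c : R) (x y z : 'I_n -> {mpoly R[n]}) :
  \sum_(a < n) (c *: x a + y a) * z a = c *: (\sum_(a < n) x a * z a) + \sum_(a < n) y a * z a.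
Proof.
rewrite scaler_sumr -big_split /=; apply: eq_bigr => a _.
by rewrite mulrDl scalerAl.
Qed.

Lemma sumH2 (c : R) (x y z : 'I_n -> {mpoly R[n]}) :
  \sum_(a < n) z a * (c *: x a + y a) = c *: (\sum_(a < n) z a * x a) + \sum_(a < n) z a * y a.
Proof.
rewrite scaler_sumr -big_split /=; apply: eq_bigr => a _.
by rewrite mulrDr scalerAr.
Qed.

Lemma sumH3 (c : R) (z : 'I_n -> {mpoly R[n]}) p q :
  \sum_(a < n) z a * mderiv a (c *: p + q) =
  c *: (\sum_(a < n) z a * mderiv a p) + \sum_(a < n) z a * mderiv a q.
Proof.
rewrite scaler_sumr -big_split /=; apply: eq_bigr => a _.
by rewrite linearP mulrDr scalerAr.
Qed.

Lemma sumH4 (c : R) (z x y : 'I_n -> {mpoly R[n]}) b :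
  \sum_(a < n) z a * mderiv b (c *: x a + y a) =
  c *: (\sum_(a < n) z a * mderiv b (x a)) + \sum_(a < n) z a * mderiv b (y a).
Proof.
rewrite scaler_sumr -big_split /=; apply: eq_bigr => a _.
by rewrite linearP mulrDr scalerAr.
Qed.

Lemma lie_lin (c : R) (V1 V2 : vfield R n) G l i j :
  lie (fun a => c *: V1 a + V2 a) G l i j = c *: lie V1 G l i j + lie V2 G l i j.
Proof.
rewrite /lie (sumH1 c V1 V2 (fun a => mderiv a (G l i j))).
rewrite sumH3 (sumH4 c (fun a => G l a j) V1 V2) (sumH4 c (fun a => G l i a) V1 V2).
rewrite !mderivD !mderivZ -!mul_mpolyC.
by ring.
Qed.


Lemma sumL (c : R) (g x y : 'I_n -> R) :
  \sum_(a < n) g a * (c * x a + y a) = c * (\sum_(a < n) g a * x a) + \sum_(a < n) g a * y a.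
Proof.
rewrite mulr_sumr -big_split /=; apply: eq_bigr => a _.
by rewrite mulrDr mulrCA.
Qed.

Definition vcomb (c : R) (V1 V2 : vfield R n) : vfield R n := fun a => c *: V1 a + V2 a.

Lemma L0_lin c V1 V2 G : L0 (vcomb c V1 V2) G = fun x y z => c * L0 V1 G x y z + L0 V2 G x y z.
Proof.
do 3 (apply: functional_extensionality => ?).
by rewrite /L0 lie_lin mcoeffD mcoeffZ.
Qed.

Lemma L1_lin c V1 V2 G x y z w : L1 (vcomb c V1 V2) G x y z w = c * L1 V1 G x y z w + L1 V2 G x y z w.
Proof. by rewrite /L1 lie_lin mcoeffD mcoeffZ. Qed.

Lemma corr_lin c V1 V2 G x y z w : corr (vcomb c V1 V2) G x y z w = c * corr V1 G x y z w + corr V2 G x y z w.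
Proof. rewrite /corr L0_lin /= !sumL. by ring. Qed.

Lemma Phi_lin c V1 V2 G x y z w : Phi (vcomb c V1 V2) G x y z w = c * Phi V1 G x y z w + Phi V2 G x y z w.
Proof. rewrite /Phi !L1_lin !corr_lin. by ring. Qed.

Lemma Phi0 G x y z w : Phi (fun _ => 0) G x y z w = 0.
Proof.
have h := Phi_lin 1 (fun _ => 0) (fun _ => 0) G x y z w.
have e : vcomb 1 (fun _ => 0) (fun _ => 0) = (fun _ => 0 : {mpoly R[n]}).
  by apply: functional_extensionality => a; rewrite /vcomb scaler0 add0r.
move: h; rewrite e mul1r => /(congr1 (fun t => t - Phi (fun _ => 0) G x y z w)).
by rewrite subrr addrK => <-.
Qed.

Lemma Phi_sum (I : Type) (r : seq I) (c : I -> R) (F : I -> vfield R n) G x y z w :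
  Phi (fun a => \sum_(k <- r) c k *: F k a) G x y z w = \sum_(k <- r) c k * Phi (F k) G x y z w.
Proof.
elim: r => [|k r IH].
  have -> : (fun a : 'I_n => \sum_(k <- [::]) c k *: F k a) = (fun _ => 0).
    by apply: functional_extensionality => a; rewrite big_nil.
  by rewrite Phi0 big_nil.
have -> : (fun a : 'I_n => \sum_(k0 <- k :: r) c k0 *: F k0 a) =
   vcomb (c k) (F k) (fun a => \sum_(k0 <- r) c k0 *: F k0 a).
  by apply: functional_extensionality => a; rewrite big_cons.
by rewrite Phi_lin IH big_cons.
Qed.


Lemma Phi_sumP (I : Type) (r : seq I) (P : pred I) (c : I -> R) (F : I -> vfield R n) G x y z w :
  Phi (fun a => \sum_(k <- r | P k) c k *: F k a) G x y z w = \sum_(k <- r | P k) c k * Phi (F k) G x y z w.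
Proof.
have -> : (fun a => \sum_(k <- r | P k) c k *: F k a) = (fun a => \sum_(k <- [seq k <- r | P k]) c k *: F k a).
  by apply: functional_extensionality => a; rewrite big_filter.
by rewrite Phi_sum big_filter.
Qed.

Definition E (v : 'I_n * 'I_n) : vfield R n := fun l => (l == v.1)%:R *: 'X_(v.2).

Lemma E0 v l : (E v l)@_0%MM = 0.
Proof. by rewrite /E mcoeffZ mcoeffX mnm1_eq0 mulr0. Qed.

Lemma E1 v l s : (E v l)@_U_(s) = (l == v.1)%:R * (v.2 == s)%:R.
Proof. by rewrite /E mcoeffZ mcoeffXU. Qed.

Lemma sum_delta (A : 'I_n * 'I_n -> R) l s :
  \sum_(v : 'I_n * 'I_n) A v * ((l == v.1)%:R * (v.2 == s)%:R) = A (l, s).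
Proof.
rewrite (bigD1 (l, s)) //= !eqxx !mulr1 big1 ?addr0 // => [[x y]] /=.
move=> H; case: eqP => [ex|_]; case: eqP => [ey|_]; rewrite ?mulr0 ?mul0r //.
by move: H; rewrite ex ey eqxx.
by rewrite /= ?mul0r ?mulr0.
Qed.

Lemma Phi_decomp (V : vfield R n) G (h0 : forall l, (V l)@_0%MM = 0) x y z w :
  Phi V G x y z w = \sum_(v : 'I_n * 'I_n) (V v.1)@_U_(v.2) * Phi (E v) G x y z w.
Proof.
pose Vl := fun a => \sum_(v : 'I_n * 'I_n) (V v.1)@_U_(v.2) *: E v a.
have eV : V = vcomb 1 Vl (fun a => V a - Vl a).
  by apply: functional_extensionality => a; rewrite /vcomb scale1r addrC subrK.
have hW0 : forall l, (V l - Vl l)@_0%MM = 0.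
  move=> l; rewrite mcoeffB h0 /Vl coef_sumT big1 ?subrr // => v _.
  by rewrite mcoeffZ E0 mulr0.
have hW1 : forall l s, (V l - Vl l)@_U_(s) = 0.
  move=> l s; rewrite mcoeffB /Vl coef_sumT.
  under eq_bigr => v _ do rewrite mcoeffZ E1.
  by rewrite (sum_delta (fun v => (V v.1)@_U_(v.2))) subrr.
rewrite {1}eV Phi_lin mul1r (Phi_high (W := fun a => V a - Vl a)) // addr0.
exact: (Phi_sumP (index_enum _) (fun _ => true) (fun v => (V v.1)@_U_(v.2)) E).
Qed.


Lemma stab_L k (G : chris R n) (V : vfield R n) (hk : (1 <= k)%N) (hs : stab k G V) :
  (forall l i j, L0 V G l i j = 0) /\ (forall l i j m, L1 V G l i j m = 0).
Proof.
case: hs => _ hs; split=> *; apply: hs; by rewrite ?mdeg0 ?mdeg1.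
Qed.

Lemma Phi_stab k (G : chris R n) (V : vfield R n) (hk : (1 <= k)%N) (hs : stab k G V) x y z w : Phi V G x y z w = 0.
Proof.
have [h0 h1] := stab_L hk hs.
have e0 : L0 V G = fun _ _ _ => 0.
  by do 3 (apply: functional_extensionality => ?); rewrite h0.
rewrite /Phi /corr e0 !h1 !big1 ?oppr0 ?addr0 ?subrr // => a _; by rewrite mulr0.
Qed.

Lemma coefM_zero_l p q m : (forall k, (mdeg k <= mdeg m)%N -> p@_k = 0) -> (p * q)@_m = 0.
Proof.
move=> h; rewrite mcoeffM big1 // => k hk; rewrite h ?mul0r //.
by apply: (leq_trans (leq_addr (mdeg k.2) _)); rewrite -mdegD -(eqP hk).
Qed.

Lemma coefM_zero_r p q m : (forall k, (mdeg k <= mdeg m)%N -> q@_k = 0) -> (p * q)@_m = 0.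
Proof.
move=> h; rewrite mcoeffM big1 // => k hk; rewrite h ?mulr0 //.
by apply: (leq_trans (leq_addl (mdeg k.1) _)); rewrite -mdegD -(eqP hk).
Qed.

Lemma mono_split (M : 'X_{1..n}) : (0 < mdeg M)%N ->
  exists x m, M = (m + U_(x))%MM /\ mdeg m = (mdeg M).-1.
Proof.
move=> hM.
have [x hx] : exists x, M x != 0%N.
  apply/existsP; apply: contraLR hM; rewrite negb_exists => /forallP h.
  have -> : M = 0%MM by apply/mnmP => i; rewrite mnm0E; apply/eqP; move: (h i); rewrite negbK.
  by rewrite mdeg0.
exists x, (M - U_(x))%MM; rewrite submK; last by rewrite lep1mP.
split=> //; by rewrite -[in RHS](submK (m := U_(x)) (m' := M)) ?lep1mP // mdegD mdeg1 addn1.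
Qed.

Lemma coef_dd i j p m :
  (mderiv i (mderiv j p))@_m = p@_(m + U_(i) + U_(j))%MM *+ ((m + U_(i))%MM j).+1 *+ (m i).+1.
Proof. by rewrite !mcoeff_deriv. Qed.

Lemma high_vanish k (G : chris R n) (V : vfield R n) : stab k G V -> (forall l s, (V l)@_U_(s) = 0) -> forall l, V l = 0.
Proof.
move=> [hka hj] h1.
have P : forall d l M, (mdeg M < d.+2)%N -> (V l)@_M = 0.
  elim=> [|d IH] l M.
    rewrite ltnS leq_eqVlt ltnS leqn0 => /orP [/mdeg1P [i /eqP ->]|].
      exact: h1.
    rewrite mdeg_eq0 => /eqP ->; by case: (hka l).
  rewrite leq_eqVlt => /orP [/eqP [] hM|]; last by rewrite ltnS; apply: IH.
  case: (leqP (mdeg M) k.+2) => hMk; last by case: (hka l) => _ ->.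
  have [x [m0 [eM hm0]]] := mono_split (M := M) (ltac:(by rewrite hM)).
  have [y [m [em hm]]] := mono_split (M := m0) (ltac:(by rewrite hm0 hM)).
  have hd : mdeg m = d by rewrite hm hm0 hM.
  have := hj l y x m (ltac:(by rewrite hd -ltnS -ltnS -hM)).
  rewrite /lie !mcoeffD mcoeffN !coef_sum.
  rewrite big1; last first.
    move=> a _; apply: coefM_zero_l => kk hkk; apply: IH; apply: (leq_ltn_trans hkk); by rewrite hd ltnS leqnSn.
  rewrite big1 ?oppr0; last first.
    move=> a _; apply: coefM_zero_r => kk hkk; rewrite mcoeff_deriv IH ?mul0rn //.
    by rewrite mdegD mdeg1 addn1 ltnS -hd.
  rewrite big1; last first.
    move=> a _; apply: coefM_zero_r => kk hkk; rewrite mcoeff_deriv IH ?mul0rn //.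
    by rewrite mdegD mdeg1 addn1 ltnS -hd.
  rewrite big1; last first.
    move=> a _; apply: coefM_zero_r => kk hkk; rewrite mcoeff_deriv IH ?mul0rn //.
    by rewrite mdegD mdeg1 addn1 ltnS -hd.
  rewrite !add0r coef_dd -em -eM => /eqP.
  by rewrite !mulrn_eq0 /= => /eqP.
move=> l; apply/mpolyP => M; rewrite mcoeff0; apply: (P (mdeg M)); exact: leqnSn.
Qed.


Definition Gs : chris R n := fun l i j => ((i == j) && (l == ordS i))%:R *: 'X_(ordS i).

Lemma Gs0 l i j : (Gs l i j)@_0%MM = 0.
Proof. by rewrite /Gs mcoeffZ mcoeffX mnm1_eq0 mulr0. Qed.

Lemma Gs1 l i j m : (Gs l i j)@_U_(m) = ((i == j) && (l == ordS i))%:R * (ordS i == m)%:R.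
Proof. by rewrite /Gs mcoeffZ mcoeffXU. Qed.

Lemma E_dd v l i j m : (mderiv i (mderiv j (E v l)))@_U_(m) = 0.
Proof.
rewrite coef_dd /E mcoeffZ mcoeffX.
have -> : (U_(v.2) == U_(m) + U_(i) + U_(j))%MM = false.
  apply/negbTE/eqP => e; have := congr1 mdeg e.
  by rewrite !mdegD !mdeg1.
by rewrite mulr0 !mul0rn.
Qed.

Lemma Phi_Gs v l i j m : Phi (E v) Gs l i j m = L1 (E v) Gs l i j m - L1 (E v) Gs l i m j.
Proof.
rewrite /Phi /corr !big1 ?oppr0 ?addr0 ?subr0 // => a _; by rewrite Gs0 mul0r.
Qed.

Lemma sum_single (c : 'I_n) (F : 'I_n -> R) : (forall a, a != c -> F a = 0) -> \sum_(a < n) F a = F c.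
Proof. by move=> h; rewrite (bigD1 c) //= big1 ?addr0. Qed.

Lemma L1_Gs r s l i j m : L1 (E (r, s)) Gs l i j m =
   (s == m)%:R * (((i == j) && (l == ordS i))%:R * (ordS i == r)%:R)
 - ((i == j) && (s == ordS i))%:R * (ordS i == m)%:R * (l == r)%:R
 + ((r == j) && (l == ordS r))%:R * (ordS r == m)%:R * (s == i)%:R
 + ((i == r) && (l == ordS i))%:R * (ordS i == m)%:R * (s == j)%:R.
Proof.
rewrite L1E E_dd addr0.
congr (_ - _ + _ + _).
- rewrite (@sum_single r); [|move=> a har].
    by rewrite E0 E1 Gs1 eqxx mul0r add0r mul1r.
  by rewrite E0 E1 (negbTE har) mul0r add0r !mul0r.
- rewrite (@sum_single s); [|move=> a har].
    by rewrite Gs0 E1 Gs1 eqxx mul0r add0r mulr1.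
  by rewrite Gs0 E1 [s == a]eq_sym (negbTE har) mul0r add0r !mulr0.
- rewrite (@sum_single r); [|move=> a har].
    by rewrite Gs0 E1 Gs1 eqxx mul0r add0r mul1r.
  by rewrite Gs0 E1 (negbTE har) mul0r add0r !mul0r mulr0.
- rewrite (@sum_single r); [|move=> a har].
    by rewrite Gs0 E1 Gs1 eqxx mul0r add0r mul1r.
  by rewrite Gs0 E1 (negbTE har) mul0r add0r !mul0r mulr0.
Qed.


Definition sel (u : 'I_n * 'I_n) : 'I_n * 'I_n * 'I_n * 'I_n :=
  if u.2 == ordS u.1 then (u.1, u.1, u.1, ordS u.1) else (ordS u.1, u.1, u.2, ordS u.1).
Definition cf (u : 'I_n * 'I_n) : R :=
  if u.2 == ordS u.1 then -1 else if u.2 == u.1 then 2 else 1.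
Definition PhiQ (V : vfield R n) (G : chris R n) (x : 'I_n * 'I_n * 'I_n * 'I_n) :=
  Phi V G x.1.1.1 x.1.1.2 x.1.2 x.2.

Lemma ordS_neq (hn : (3 <= n)%N) (p : 'I_n) : (ordS p == p) = false.
Proof.
apply/negbTE/eqP => /(congr1 val) /=; case: p => p hp /=.
have [hlt|hge] := ltnP p.+1 n.
  by rewrite modn_small //; lia.
have -> : p.+1 = n by lia.
by rewrite modnn; lia.
Qed.

Lemma ordSS_neq (hn : (3 <= n)%N) (p : 'I_n) : (ordS (ordS p) == p) = false.
Proof.
apply/negbTE/eqP => /(congr1 val) /=; case: p => p hp /=.
have [hlt|hge] := ltnP p.+1 n.
  rewrite (modn_small hlt).
  have [hlt2|hge2] := ltnP p.+2 n.
    by rewrite modn_small //; lia.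
  have -> : p.+2 = n by lia.
  by rewrite modnn; lia.
have -> : p.+1 = n by lia.
by rewrite modnn modn_small; lia.
Qed.

Lemma diagGs (hn : (3 <= n)%N) (p q r s : 'I_n) :
  PhiQ (E (r, s)) Gs (sel (p, q)) = ((r, s) == (p, q))%:R * cf (p, q).
Proof.
have h1 := ordS_neq hn p; have h1' : (p == ordS p) = false by rewrite eq_sym.
have h2 := ordSS_neq hn p; have h2' : (p == ordS (ordS p)) = false by rewrite eq_sym.
have hi : forall a b : 'I_n, (ordS a == ordS b) = (a == b) by move=> a b; apply: inj_eq; exact: ordS_inj.
rewrite /PhiQ /sel /cf /= xpair_eqE; case: (eqVneq q (ordS p)) => [->|hq] /=.
  rewrite Phi_Gs !L1_Gs !eqxx h1 h1' /=.
  case: (eqVneq r p) => [->|hrp].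
    rewrite !eqxx ?h1 ?h1' ?h2 ?h2' /= ?andbF; ring.
  rewrite /=.
  case: (eqVneq r (ordS p)) => [->|hrS] /=; rewrite ?h2' /=; ring.
rewrite Phi_Gs !L1_Gs !eqxx ?hi ?h1 ?h1' /=.
have hq' : (ordS p == q) = false by rewrite eq_sym (negbTE hq).
rewrite hq' /= !andbT.
case: (eqVneq r p) => [->|hrp].
  rewrite ?eqxx ?h1 ?h1' /=.
  case: (eqVneq q p) => [->|hqp]; rewrite ?eqxx /=; first by ring.
  have hpq : (p == q) = false by rewrite eq_sym (negbTE hqp).
  rewrite ?hpq /=; ring.
have hpr : (p == r) = false by rewrite eq_sym (negbTE hrp).
rewrite ?hpr /= ?andbF.
case: (eqVneq q p) => [->|hqp]; rewrite ?eqxx /=.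
  case: (eqVneq s (ordS p)) => [->|hs]; rewrite ?eqxx /=; ring.
have hpq : (p == q) = false by rewrite eq_sym (negbTE hqp).
rewrite ?hpq /=; ring.
Qed.


Lemma diagGs' (hn : (3 <= n)%N) (w u : 'I_n * 'I_n) :
  PhiQ (E w) Gs (sel u) = (w == u)%:R * cf u.
Proof. by case: w => r s; case: u => p q; exact: diagGs. Qed.

Definition Nm (G : chris R n) : 'M[R]_#|{: 'I_n * 'I_n}| :=
  \matrix_(u, v) PhiQ (E (enum_val v)) G (sel (enum_val u)).

Lemma cf_neq0 u : cf u != 0.
Proof.
rewrite /cf; case: ifP => _; first by rewrite oppr_eq0 oner_eq0.
by case: ifP => _; rewrite ?pnatr_eq0 ?oner_eq0.
Qed.

Lemma det_Gs (hn : (3 <= n)%N) : \det (Nm Gs) != 0.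
Proof.
have -> : Nm Gs = diag_mx (\row_u cf (enum_val u)).
  apply/matrixP => u v; rewrite !mxE diagGs'.
  case: eqP => [/enum_val_inj ->|hne]; first by rewrite eqxx mul1r mulr1n.
  case: eqP => [e|_]; first by case: hne; rewrite e.
  by rewrite mul0r mulr0n.
  exact: hn.
rewrite det_diag; apply/prodf_neq0 => i _; rewrite mxE; exact: cf_neq0.
Qed.

Lemma sum_reindex (F : 'I_n * 'I_n -> R) :
  \sum_(v < #|{: 'I_n * 'I_n}|) F (enum_val v) = \sum_(w : 'I_n * 'I_n) F w.
Proof.
rewrite [RHS](reindex (@enum_val _ (pred_of_simpl predT))) //.
by apply: onW_bij; exact: enum_val_bij.
Qed.

Lemma stab_A0 k (G : chris R n) (V : vfield R n) : (1 <= k)%N -> \det (Nm G) != 0 ->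
  stab k G V -> forall l s, (V l)@_U_(s) = 0.
Proof.
move=> hk hdet hs.
pose a : 'cV[R]_#|{: 'I_n * 'I_n}| := \col_v (V (enum_val v).1)@_U_((enum_val v).2).
have h0 : forall l, (V l)@_0%MM = 0 by move=> l; case: hs => [hka _]; case: (hka l).
have ha : Nm G *m a = 0.
  apply/matrixP => u j; rewrite !mxE.
  have := Phi_stab hk hs (sel (enum_val u)).1.1.1 (sel (enum_val u)).1.1.2 (sel (enum_val u)).1.2 (sel (enum_val u)).2.
  rewrite Phi_decomp // -(sum_reindex (fun w => (V w.1)@_U_(w.2) * Phi (E w) G _ _ _ _)) => e.
  apply: etrans e; apply: eq_bigr => v _; rewrite !mxE mulrC //.
have a0 : a = 0.
  have hu : Nm G \in unitmx by rewrite unitmxE unitfE.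
  by rewrite -(mulKmx hu a) ha mulmx0.
move=> l s; move/matrixP: a0 => /(_ (enum_rank (l, s)) ord0).
by rewrite !mxE enum_rankK.
Qed.


Definition good (C : (chris R n -> R) -> Prop) : Prop :=
  [/\ (forall F F', (forall G, F G = F' G) -> C F -> C F'),
      (forall c, C (fun _ => c)),
      (forall l i j m, C (fun G => (G l i j)@_m)),
      (forall F1 F2, C F1 -> C F2 -> C (fun G => F1 G + F2 G)) &
      (forall F1 F2, C F1 -> C F2 -> C (fun G => F1 G * F2 G))].

Section Good.
Variable C : (chris R n -> R) -> Prop.
Hypothesis hC : good C.

Lemma g_ext F F' : (forall G, F G = F' G) -> C F' -> C F.
Proof. move=> e hF'; case: hC => h _ _ _ _; exact: (h F' F (fun G => esym (e G)) hF'). Qed.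
Lemma g_const c : C (fun _ => c). Proof. by case: hC => _ h _ _ _; exact: h. Qed.
Lemma g_coef l i j m : C (fun G => (G l i j)@_m). Proof. by case: hC => _ _ h _ _; exact: h. Qed.
Lemma g_add F1 F2 : C F1 -> C F2 -> C (fun G => F1 G + F2 G). Proof. by case: hC => _ _ _ h _; exact: h. Qed.
Lemma g_mul F1 F2 : C F1 -> C F2 -> C (fun G => F1 G * F2 G). Proof. by case: hC => _ _ _ _ h; exact: h. Qed.
Lemma g_opp F : C F -> C (fun G => - F G).
Proof.
move=> h; apply: (g_ext (F' := fun G => (-1) * F G)); first by move=> G; rewrite mulN1r.
by apply: g_mul => //; exact: g_const.
Qed.
Lemma g_sub F1 F2 : C F1 -> C F2 -> C (fun G => F1 G - F2 G).
Proof. by move=> h1 h2; apply: g_add => //; exact: g_opp. Qed.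
Lemma g_muln F k : C F -> C (fun G => F G *+ k).
Proof.
move=> h; apply: (g_ext (F' := fun G => F G * k%:R)); first by move=> G; rewrite mulr_natr.
by apply: g_mul => //; exact: g_const.
Qed.
Lemma g_sum (I : Type) (r : seq I) (P : pred I) (F : I -> chris R n -> R) :
  (forall i, C (F i)) -> C (fun G => \sum_(i <- r | P i) F i G).
Proof.
move=> h; elim: r => [|x r IH].
  by apply: (g_ext (F' := fun _ => 0)); [move=> G; rewrite big_nil | exact: g_const].
case Px: (P x).
  apply: (g_ext (F' := fun G => F x G + \sum_(i <- r | P i) F i G)); last exact: g_add.
  by move=> G; rewrite big_cons Px.
by apply: (g_ext (F' := fun G => \sum_(i <- r | P i) F i G)) => // G; rewrite big_cons Px.
Qed.
Lemma g_prod (I : Type) (r : seq I) (P : pred I) (F : I -> chris R n -> R) :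
  (forall i, C (F i)) -> C (fun G => \prod_(i <- r | P i) F i G).
Proof.
move=> h; elim: r => [|x r IH].
  by apply: (g_ext (F' := fun _ => 1)); [move=> G; rewrite big_nil | exact: g_const].
case Px: (P x).
  apply: (g_ext (F' := fun G => F x G * \prod_(i <- r | P i) F i G)); last exact: g_mul.
  by move=> G; rewrite big_cons Px.
by apply: (g_ext (F' := fun G => \prod_(i <- r | P i) F i G)) => // G; rewrite big_cons Px.
Qed.

Lemma g_coefMl (p : {mpoly R[n]}) a l i j M : C (fun G => (p * mderiv a (G l i j))@_M).
Proof.
apply: (g_ext (F' := fun G => \sum_(k : 'X_{1..n < (mdeg M).+1, (mdeg M).+1} | M == (k.1 + k.2)%MM)
   (p@_k.1 * ((G l i j)@_(k.2 + U_(a)) *+ (k.2 a).+1)))).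
  by move=> G; rewrite mcoeffM; apply: eq_bigr => k _; rewrite mcoeff_deriv.
apply: g_sum => k; apply: g_mul; first exact: g_const.
apply: g_muln; exact: g_coef.
Qed.

Lemma g_coefMr (p : {mpoly R[n]}) a b c M : C (fun G => (G a b c * p)@_M).
Proof.
apply: (g_ext (F' := fun G => \sum_(k : 'X_{1..n < (mdeg M).+1, (mdeg M).+1} | M == (k.1 + k.2)%MM)
   ((G a b c)@_k.1 * p@_k.2))).
  by move=> G; rewrite mcoeffM.
apply: g_sum => k; apply: g_mul; [exact: g_coef | exact: g_const].
Qed.

Lemma g_lie (V : vfield R n) l i j M : C (fun G => (lie V G l i j)@_M).
Proof.
apply: (g_ext (F' := fun G =>
    \sum_(a < n) (V a * mderiv a (G l i j))@_M
  - \sum_(a < n) (G a i j * mderiv a (V l))@_M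
  + \sum_(a < n) (G l a j * mderiv i (V a))@_M
  + \sum_(a < n) (G l i a * mderiv j (V a))@_M
  + (mderiv i (mderiv j (V l)))@_M)).
  by move=> G; rewrite /lie !mcoeffD mcoeffN !coef_sum.
apply: g_add; last exact: g_const.
apply: g_add; last by apply: g_sum => a; exact: g_coefMr.
apply: g_add; last by apply: g_sum => a; exact: g_coefMr.
apply: g_sub; apply: g_sum => a; [exact: g_coefMl | exact: g_coefMr].
Qed.

Lemma g_Phi (V : vfield R n) x y z w : C (fun G => Phi V G x y z w).
Proof.
have gL0 : forall a b c, C (fun G => L0 V G a b c) by move=> *; exact: g_lie.
have gL1 : forall a b c d, C (fun G => L1 V G a b c d) by move=> *; exact: g_lie.
have gcorr : forall a b c d, C (fun G => corr V G a b c d).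
  move=> a b c d; rewrite /corr.
  apply: g_add; last by apply: g_sum => e; apply: g_mul; [exact: g_coef | exact: gL0].
  apply: g_add; last by apply: g_sum => e; apply: g_mul; [exact: g_coef | exact: gL0].
  by apply: g_opp; apply: g_sum => e; apply: g_mul; [exact: g_coef | exact: gL0].
by rewrite /Phi; apply: g_sub; apply: g_sub.
Qed.

Lemma g_det : C (fun G => \det (Nm G)).
Proof.
apply: (g_ext (F' := fun G => \sum_(s : 'S_#|{: 'I_n * 'I_n}|) (-1) ^+ s *
     \prod_i PhiQ (E (enum_val (s i))) G (sel (enum_val i)))).
  by move=> G; rewrite /determinant; apply: eq_bigr => s _; congr (_ * _); apply: eq_bigr => i _; rewrite mxE.
apply: g_sum => s; apply: g_mul; first exact: g_const.
apply: g_prod => i; exact: g_Phi.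
Qed.

End Good.


Lemma mul_bound (a a' b b' d e : R) :
  `|a' - a| < d -> `|b' - b| < d -> d <= 1 -> d * (`|a| + `|b| + 1) <= e ->
  `|a' * b' - a * b| < e.
Proof.
move=> h1 h2 hd he.
have eq : a' * b' - a * b = (a' - a) * b' + a * (b' - b) by ring.
have hb' : `|b'| <= `|b| + 1.
  have : `|b'| <= `|b| + `|b' - b|.
    by have := ler_normD b (b' - b); rewrite addrC subrK addrC.
  lra.
have t1 : `|a' - a| * `|b'| <= `|a' - a| * (`|b| + 1) by apply: ler_wpM2l.
have t2 : `|a' - a| * (`|b| + 1) < d * (`|b| + 1).
  by rewrite ltr_pM2r // ltr_pwDr.
have t3 : `|a| * `|b' - b| <= `|a| * d by apply: ler_wpM2l => //; exact: ltW.
rewrite eq; apply: (le_lt_trans (ler_normD _ _)); rewrite !normrM.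
lra.
Qed.

Definition Ccont (F : chris R n -> R) : Prop :=
  forall G (e : R), 0 < e -> exists2 d : R, 0 < d &
    forall G', jet_close d G G' -> `|F G' - F G| < e.

Lemma jet_close_le (d d' : R) (G G' : chris R n) : d <= d' -> jet_close d G G' -> jet_close d' G G'.
Proof. by move=> hd h l i j m; apply: (lt_le_trans (h l i j m)). Qed.

Lemma good_cont : good Ccont.
Proof.
split.
- move=> F F' e h G d hd; have [d' hd' h'] := h G d hd; exists d' => // G' hG'.
  by rewrite -!e; apply: h'.
- by move=> c G e he; exists 1 => // G' _; rewrite subrr normr0.
- by move=> l i j m G e he; exists e => // G' hG'; apply: hG'.
- move=> F1 F2 h1 h2 G e he.
  have [d1 hd1 k1] := h1 G (e / 2) (ltac:(lra)).
  have [d2 hd2 k2] := h2 G (e / 2) (ltac:(lra)).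
  exists (Num.min d1 d2); first by rewrite lt_min hd1 hd2.
  move=> G' hG'.
  have m1 : Num.min d1 d2 <= d1 by rewrite ge_min lexx.
  have m2 : Num.min d1 d2 <= d2 by rewrite ge_min lexx orbT.
  have c1 := k1 G' (jet_close_le m1 hG').
  have c2 := k2 G' (jet_close_le m2 hG').
  have := ler_normD (F1 G' - F1 G) (F2 G' - F2 G).
  have -> : F1 G' - F1 G + (F2 G' - F2 G) = F1 G' + F2 G' - (F1 G + F2 G) by ring.
  lra.
- move=> F1 F2 h1 h2 G e he.
  set A := `|F1 G|; set B := `|F2 G|.
  have hAB : 0 < A + B + 1 by rewrite /A /B; have := normr_ge0 (F1 G); have := normr_ge0 (F2 G); lra.
  set de := Num.min 1 (e / (A + B + 1)).
  have hde : 0 < de by rewrite lt_min ltr01 divr_gt0.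
  have hde1 : de <= 1 by rewrite ge_min lexx.
  have hde2 : de * (A + B + 1) <= e.
    rewrite -ler_pdivlMr //; by rewrite ge_min lexx orbT.
  have [d1 hd1 k1] := h1 G de hde.
  have [d2 hd2 k2] := h2 G de hde.
  exists (Num.min d1 d2); first by rewrite lt_min hd1 hd2.
  move=> G' hG'.
  have m1 : Num.min d1 d2 <= d1 by rewrite ge_min lexx.
  have m2 : Num.min d1 d2 <= d2 by rewrite ge_min lexx orbT.
  have c1 := k1 G' (jet_close_le m1 hG').
  have c2 := k2 G' (jet_close_le m2 hG').
  exact: mul_bound c1 c2 hde1 hde2.
Qed.


Definition Gline (G H : chris R n) (t : R) : chris R n := fun l i j => G l i j + t *: H l i j.

Definition Cline (G H : chris R n) (F : chris R n -> R) : Prop :=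
  exists P : {poly R}, forall t, F (Gline G H t) = P.[t].

Lemma good_line G H : good (Cline G H).
Proof.
split.
- by move=> F F' e [P hP]; exists P => t; rewrite -e.
- by move=> c; exists c%:P => t; rewrite hornerC.
- move=> l i j m; exists (((H l i j)@_m)%:P * 'X + ((G l i j)@_m)%:P) => t.
  by rewrite /Gline mcoeffD mcoeffZ hornerD hornerMX !hornerC addrC mulrC.
- by move=> F1 F2 [P1 h1] [P2 h2]; exists (P1 + P2) => t; rewrite h1 h2 hornerD.
- by move=> F1 F2 [P1 h1] [P2 h2]; exists (P1 * P2) => t; rewrite h1 h2 hornerM.
Qed.


Definition bnd (p : {mpoly R[n]}) : R := \sum_(m <- msupp p) `|p@_m|.

Lemma coef_bnd p m : `|p@_m| <= bnd p.
Proof.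
have h0 : 0 <= bnd p by rewrite /bnd sumr_ge0.
case: (boolP (m \in msupp p)) => hm; last by rewrite memN_msupp_eq0 // normr0.
rewrite /bnd (bigD1_seq m) ?msupp_uniq //= lerDl sumr_ge0 //.
Qed.

Lemma sum_ge_term (I : finType) (f : I -> R) i : (forall j, 0 <= f j) -> f i <= \sum_j f j.
Proof. by move=> h; rewrite (bigD1 i) //= lerDl sumr_ge0. Qed.

Definition Mtot (H : chris R n) : R := \sum_(x : 'I_n * 'I_n * 'I_n) bnd (H x.1.1 x.1.2 x.2).

Lemma coef_Mtot (H : chris R n) l i j m : `|(H l i j)@_m| <= Mtot H.
Proof.
apply: (le_trans (coef_bnd _ m)).
rewrite /Mtot; apply: (@sum_ge_term _ (fun x : 'I_n * 'I_n * 'I_n => bnd (H x.1.1 x.1.2 x.2)) (l, i, j)).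
by move=> x; rewrite /bnd sumr_ge0.
Qed.

Lemma Mtot_ge0 (H : chris R n) : 0 <= Mtot H.
Proof. by rewrite /Mtot sumr_ge0 // => x _; rewrite /bnd sumr_ge0. Qed.

Lemma nonroot (P : {poly R}) (d : R) : P != 0 -> 0 < d -> exists t, [/\ 0 < t, t <= d & P.[t] != 0].
Proof.
move=> hP hd.
pose rs := [seq d / (j.+1)%:R | j <- iota 0 (size P)].
have urs : uniq rs.
  rewrite map_inj_uniq ?iota_uniq // => a b /eqP.
  rewrite eqr_div ?pnatr_eq0 ?lt0r_neq0 // => /eqP /(mulfI (lt0r_neq0 hd)) /eqP.
  by rewrite eqr_nat => /eqP [].
case: (boolP (all (root P) rs)) => h.
  by have := max_poly_roots hP h urs; rewrite size_map size_iota ltnn.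
case/allPn: h => t /mapP [j _ ->] ht.
exists (d / (j.+1)%:R); split => //.
- by rewrite divr_gt0 // ltr0n.
- by rewrite ler_pdivrMr ?ltr0n // ler_peMr ?ler1n // ltW.
Qed.


Lemma stab_comb k (G : chris R n) c V1 V2 : stab k G V1 -> stab k G V2 -> stab k G (vcomb c V1 V2).
Proof.
move=> [ka1 j1] [ka2 j2]; split.
- move=> l; case: (ka1 l) => a1 b1; case: (ka2 l) => a2 b2.
  split; first by rewrite /vcomb mcoeffD mcoeffZ a1 a2 mulr0 addr0.
  by move=> m hm; rewrite /vcomb mcoeffD mcoeffZ b1 // b2 // mulr0 addr0.
- by move=> l i j m hm; rewrite lie_lin mcoeffD mcoeffZ j1 // j2 // mulr0 addr0.
Qed.

Lemma dX (x j : 'I_n) : mderiv j ('X_x : {mpoly R[n]}) = ((x == j)%:R)%:MP.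
Proof.
rewrite mderivX mnm1E; case: eqP => [->|_].
  have -> : (U_(j) - U_(j))%MM = 0%MM by apply/mnmP => a; rewrite !mnmE subnn.
  by rewrite mpolyX0 scale1r mpolyC1.
by rewrite scale0r mpolyC0.
Qed.

Lemma ddXX (i j x y : 'I_n) :
  (mderiv i (mderiv j ('X_x * 'X_y : {mpoly R[n]})))@_0%MM =
  (x == j)%:R * (y == i)%:R + (y == j)%:R * (x == i)%:R.
Proof.
rewrite mderivM !dX mderivD mderiv_mulC [X in _ + mderiv i X]mulrC mderiv_mulC !dX.
by rewrite mcoeffD !coefM0 !mpolyCK.
Qed.


Lemma dsum (I : Type) (r : seq I) (P : pred I) (F : I -> {mpoly R[n]}) j :
  mderiv j (\sum_(a <- r | P a) F a) = \sum_(a <- r | P a) mderiv j (F a).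
Proof. exact: raddf_sum. Qed.

Definition bq (G : chris R n) (A : 'M[R]_n) l i j : R :=
  \sum_(a < n) (G a i j)@_0%MM * A l a - \sum_(a < n) (G l a j)@_0%MM * A a i
  - \sum_(a < n) (G l i a)@_0%MM * A a j.

Definition V0 (G : chris R n) (A : 'M[R]_n) : vfield R n := fun l =>
  \sum_(s < n) A l s *: 'X_s + \sum_(x < n) \sum_(y < n) (bq G A l x y / 2) *: ('X_x * 'X_y).

Lemma V0_coef G A l m : (V0 G A l)@_m =
  \sum_(s < n) A l s * (U_(s) == m)%MM%:R + \sum_(x < n) \sum_(y < n) (bq G A l x y / 2) * ((U_(x) + U_(y))%MM == m)%:R.
Proof.
rewrite /V0 mcoeffD !coef_sum; congr (_ + _).
  by apply: eq_bigr => s _; rewrite mcoeffZ mcoeffX.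
apply: eq_bigr => x _; rewrite coef_sum; apply: eq_bigr => y _.
by rewrite mcoeffZ -mpolyXD mcoeffX.
Qed.

Lemma V0_0 G A l : (V0 G A l)@_0%MM = 0.
Proof.
rewrite V0_coef !big1 ?addr0 // => x _.
  by rewrite big1 // => y _; rewrite (_ : (_ == _) = false) ?mulr0 //; apply/negbTE/eqP => /(congr1 mdeg); rewrite mdegD !mdeg1 mdeg0.
by rewrite (_ : (_ == _) = false) ?mulr0 //; apply/negbTE/eqP => /(congr1 mdeg); rewrite !mdeg1 mdeg0.
Qed.


Lemma V0_1 G A l s : (V0 G A l)@_U_(s) = A l s.
Proof.
rewrite V0_coef [X in _ + X]big1 ?addr0.
  rewrite (@sum_single s) ?eqxx ?mulr1 // => a has.
  by rewrite eq_mnm1 (negbTE has) mulr0.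
move=> x _; rewrite big1 // => y _.
by rewrite (_ : (_ == _) = false) ?mulr0 //; apply/negbTE/eqP => /(congr1 mdeg); rewrite mdegD !mdeg1.
Qed.

Lemma V0_hi G A l m : (2 < mdeg m)%N -> (V0 G A l)@_m = 0.
Proof.
move=> hm; rewrite V0_coef !big1 ?addr0 // => x _.
  rewrite big1 // => y _; rewrite (_ : (_ == _) = false) ?mulr0 //.
  by apply/negbTE/eqP => e; move: hm; rewrite -e mdegD !mdeg1.
rewrite (_ : (_ == _) = false) ?mulr0 //.
by apply/negbTE/eqP => e; move: hm; rewrite -e mdeg1.
Qed.

Lemma V0_dd G A l i j : (mderiv i (mderiv j (V0 G A l)))@_0%MM = (bq G A l j i + bq G A l i j) / 2.
Proof.
rewrite /V0 [mderiv j _]mderivD [mderiv j (\sum_(s < n) _)]dsum [mderiv j (\sum_(x < n) _)]dsum.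
rewrite [mderiv i _]mderivD [mderiv i (\sum_(s < n) _)]dsum [mderiv i (\sum_(x < n) _)]dsum.
rewrite mcoeffD !coef_sum.
rewrite big1 ?add0r; last first.
  by move=> s _; rewrite mderivZ dX mderivZ mderivC scaler0 mcoeff0.
under eq_bigr => x _ do rewrite [mderiv j _]dsum [mderiv i _]dsum coef_sum.
under eq_bigr => x _ do under eq_bigr => y _ do rewrite !mderivZ mcoeffZ ddXX mulrDr.
under eq_bigr => x _ do rewrite big_split /=.
rewrite big_split /=.
rewrite (@sum_single j); last first.
  by move=> a ha; apply: big1 => y _; rewrite (negbTE ha) ?mul0r ?mulr0.
rewrite (@sum_single i); last first.
  by move=> a ha; rewrite (negbTE ha) ?mul0r ?mulr0.
rewrite (@sum_single i); last first.
  by move=> a ha; apply: big1 => y _; rewrite (negbTE ha) ?mul0r ?mulr0.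
rewrite (@sum_single j); last first.
  by move=> a ha; rewrite (negbTE ha) ?mul0r ?mulr0.
rewrite !eqxx /=; ring.
Qed.


Lemma bq_sym G A l i j : conn_jet 0 G -> bq G A l j i = bq G A l i j.
Proof.
move=> hG; rewrite /bq.
have e1 : \sum_(a < n) (G a j i)@_0%MM * A l a = \sum_(a < n) (G a i j)@_0%MM * A l a.
  by apply: eq_bigr => a _; rewrite (hG a j i).1.
have e2 : \sum_(a < n) (G l a i)@_0%MM * A a j = \sum_(a < n) (G l i a)@_0%MM * A a j.
  by apply: eq_bigr => a _; rewrite (hG l a i).1.
have e3 : \sum_(a < n) (G l j a)@_0%MM * A a i = \sum_(a < n) (G l a j)@_0%MM * A a i.
  by apply: eq_bigr => a _; rewrite (hG l j a).1.
rewrite e1 e2 e3; ring.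
Qed.

Lemma part1_ex G A : conn_jet 0 G -> stab 0 G (V0 G A) /\ forall l i, (V0 G A l)@_U_(i) = A l i.
Proof.
move=> hG; split; last exact: V0_1.
split.
  move=> l; split; first exact: V0_0.
  by move=> m hm; apply: V0_hi.
move=> l i j m; rewrite leqn0 mdeg_eq0 => /eqP ->.
have -> : (lie (V0 G A) G l i j)@_0%MM = L0 (V0 G A) G l i j by [].
rewrite L0E V0_dd bq_sym //.
have -> : \sum_(a < n) (V0 G A a)@_0%MM * (G l i j)@_U_(a) = 0.
  by apply: big1 => a _; rewrite V0_0 mul0r.
have -> : \sum_(a < n) (G a i j)@_0%MM * (V0 G A l)@_U_(a) = \sum_(a < n) (G a i j)@_0%MM * A l a.
  by apply: eq_bigr => a _; rewrite V0_1.
have -> : \sum_(a < n) (G l a j)@_0%MM * (V0 G A a)@_U_(i) = \sum_(a < n) (G l a j)@_0%MM * A a i.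
  by apply: eq_bigr => a _; rewrite V0_1.
have -> : \sum_(a < n) (G l i a)@_0%MM * (V0 G A a)@_U_(j) = \sum_(a < n) (G l i a)@_0%MM * A a j.
  by apply: eq_bigr => a _; rewrite V0_1.
rewrite /bq; field.
by [].
Qed.


Lemma Gs_conn k : (1 <= k)%N -> conn_jet k Gs.
Proof.
move=> hk l i j; split.
  rewrite /Gs; case: (eqVneq i j) => [->|hij] //.
  by rewrite /= !scale0r.
move=> m hm; rewrite /Gs mcoeffZ mcoeffX (_ : (U_(ordS i) == m)%MM = false) ?mulr0 //.
by apply/negbTE/eqP => e; move: hm; rewrite -e mdeg1 ltnNge hk.
Qed.

Lemma Gline_conn k (G G2 : chris R n) t : conn_jet k G -> conn_jet k G2 ->
  conn_jet k (Gline G (fun l i j => G2 l i j - G l i j) t).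
Proof.
move=> h1 h2 l i j; split.
  by rewrite /Gline (h1 l i j).1 (h2 l i j).1.
move=> m hm; rewrite /Gline mcoeffD mcoeffZ mcoeffB (h1 l i j).2 // (h2 l i j).2 //.
by rewrite subrr mulr0 addr0.
Qed.

End Basics.

Unset Implicit Arguments.

Theorem mainTheorem4 (R : realType) (n : nat) (hn : (3 <= n)%N) :
  (* k = 0: V |-> V_1 is a bijection from the stabilizer onto linear fields
     (linear fields  <->  n x n matrices A, V_1^l = sum_i A l i x_i) *)
  (forall G : chris R n, conn_jet 0 G ->
     forall A : 'M[R]_n,
       exists V : vfield R n,
         (stab 0 G V /\ forall l i : 'I_n, (V l)@_U_(i) = A l i) /\
         (forall V' : vfield R n,
            stab 0 G V' -> (forall l i : 'I_n, (V' l)@_U_(i) = A l i) ->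
            forall l, V' l = V l)) /\
  (* k >= 1: trivial stabilizer on an open dense subset of F_k *)
  (forall k : nat, (1 <= k)%N ->
     exists S : chris R n -> Prop,
       (forall G, S G -> conn_jet k G) /\ jet_open k S /\ jet_dense k S /\
       forall G, S G -> forall V : vfield R n, stab k G V -> forall l, V l = 0).
Proof.
split.
  move=> G hG A; exists (V0 G A); split; first exact: part1_ex.
  move=> V' hV' hA l.
  have hs := (part1_ex A hG).1.
  have hW := stab_comb (-1) hs hV'.
  have h1 : forall l s, (vcomb (-1) (V0 G A) V' l)@_U_(s) = 0.
    by move=> l' s; rewrite /vcomb mcoeffD mcoeffZ V0_1 hA mulN1r addNr.
  have := high_vanish hW h1 l.
  by rewrite /vcomb scaleN1r addrC => /eqP; rewrite subr_eq0 => /eqP.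
move=> k hk.
exists (fun G => conn_jet k G /\ exists2 e : R, 0 < e &
          forall G', conn_jet k G' -> jet_close e G G' -> \det (Nm G') != 0).
split; first by move=> G [].
split.
  move=> G [hG [e he h]]; exists (e / 2); first by rewrite divr_gt0.
  move=> G' hG' hc; split => //; exists (e / 2); first by rewrite divr_gt0.
  move=> G'' hG'' hc2; apply: h => // l i j m.
  have c1 := hc l i j m; have c2 := hc2 l i j m.
  have c3 := ler_normD ((G'' l i j)@_m - (G' l i j)@_m) ((G' l i j)@_m - (G l i j)@_m).
  have e3 : (G'' l i j)@_m - (G' l i j)@_m + ((G' l i j)@_m - (G l i j)@_m) = (G'' l i j)@_m - (G l i j)@_m by ring.
  rewrite e3 in c3.
  lra.
split.
  move=> G hG e he.
  pose H := fun l i j => Gs R l i j - G l i j.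
  have [P hP] := g_det (good_line G H).
  have eG1 : Gline G H 1 = @Gs R n.
    do 3 (apply: functional_extensionality => ?).
    by rewrite /Gline /H scale1r addrC subrK.
  have hP0 : P != 0.
    apply/negP => /eqP P0; move: (det_Gs R hn); by rewrite -eG1 hP P0 horner0 eqxx.
  have hM := Mtot_ge0 H.
  have hd0 : 0 < e / (2 * (Mtot H + 1)) by rewrite divr_gt0 //; lra.
  have [t [ht0 htd hPt]] := nonroot hP0 hd0.
  have hD1 : \det (Nm (Gline G H t)) != 0 by rewrite hP.
  have hG1 : conn_jet k (Gline G H t) := Gline_conn t hG (Gs_conn R hk).
  have hn1 : 0 < `|\det (Nm (Gline G H t))| by rewrite normr_gt0.
  have [d hd hcd] := g_det (good_cont R n) (Gline G H t) _ hn1.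
  exists (Gline G H t); split.
    split => //; exists d => // G' _ hc.
    apply/negP => /eqP hz; have := hcd G' hc; by rewrite hz sub0r normrN ltxx.
  move=> l i j m; rewrite /Gline mcoeffD mcoeffZ addrC addKr normrM (ger0_norm (ltW ht0)).
  have hb := coef_Mtot H l i j m.
  have hb2 : t * `|(H l i j)@_m| <= t * Mtot H by apply: ler_wpM2l => //; exact: ltW.
  have ht2 : t * (2 * (Mtot H + 1)) <= e by rewrite -ler_pdivlMr //; lra.
  lra.
move=> G [hG [e he h]] V hs l.
have hD : \det (Nm G) != 0 by apply: h => // l' i j m; rewrite subrr normr0.
exact: high_vanish hs (stab_A0 hk hD hs) l.
Qed.
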